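(* The Dirac operator $\mathcal{D}$ satisfies $\mathcal{D}=c\circ\overleftarrow{\nabla}^{\mathcal{S}}: \mathcal{S}\to L^{2}(S,h)$.
   Context: $\mathcal{B}=\mathcal{O}(S^2_q)$, $q\in(0,1]$, with spinor module $\mathcal{S}=\mathcal{S}^+\oplus\mathcal{S}^-$, $\mathcal{S}^\pm=\mathrm{span}\{t^l_{i,\pm1/2}b:b\in\mathcal{B}\}$, Hilbert space $L^2(S,h)$ ($h$ the Haar state) and Dabrowski--Sitarz Dirac operator $\mathcal{D}=\begin{pmatrix}0&\partial_e\\ \partial_f&0\end{pmatrix}$. $\mathcal{S}^\pm$ carry left inner products ${}_{\mathcal{B}}\langle s_+,t_+\rangle=qs_+t_+^*$, ${}_{\mathcal{B}}\langle s_-,t_-\rangle=q^{-1}s_-t_-^*$, with left frames $s_{i,+}=q^{-1/2}t^{1/2}_{i,1/2}$ and $s_{i,-}=q^{1/2}t^{1/2}_{i,-1/2}$, $i=\pm1/2$. $\overleftarrow{\nabla}^{\mathcal{S}}=\overleftarrow{\nabla}^{\mathcal{S}^+}\oplus\overleftarrow{\nabla}^{\mathcal{S}^-}$ is the sum of the left Grassmann connections of these frames, $\overleftarrow{\nabla}(x)=\sum_i[\mathcal{D},{}_{\mathcal{B}}\langle x,s_i\rangle]\otimes s_i$, and $c:\Omega^1_{\mathcal{D}}(\mathcal{B})\otimes_{\mathcal{B}}\mathcal{S}\to\mathcal{S}$ is the Clifford action of one-forms (operators on $L^2(S,h)$) on spinors. *)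

(* Defs.v *)
From HB Require Import structures.
From mathcomp Require Import all_boot all_order all_algebra.
Set Implicit Arguments. Unset Strict Implicit. Unset Printing Implicit Defensive.
Import Order.TTheory GRing.Theory Num.Theory.
Local Open Scope ring_scope.

(* Indices i, j in {-1/2, +1/2} are encoded as bool: false = -1/2, true = +1/2. *)

Section SUq2.
Variables (C : numClosedFieldType) (A : lalgType C) (q : C).
Variable star : A -> A.
Variables (a c : A).

Definition tmat (i j : bool) : A :=
  match i, j with
  | false, false => a
  | false, true  => - (q *: star c)
  | true,  false => c
  | true,  true  => star a
  end.

Record is_SUq2 : Prop := {
  star_add : forall x y, star (x + y) = star x + star y;
  star_scale : forall (k : C) x, star (k *: x) = (k^* ) *: star x;
  star_mul : forall x y, star (x * y) = star y * star x;
  star_one : star 1 = 1;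
  star_inv : forall x, star (star x) = x;
  rel_ac : a * c = q *: (c * a);
  rel_acs : a * star c = q *: (star c * a);
  rel_ccs : c * star c = star c * c;
  rel_unit1 : star a * a + star c * c = 1;
  rel_unit2 : a * star a + (q ^+ 2) *: (c * star c) = 1
}.

Variables (de df dk dkinv : A -> A).

(* The left action of U_q(su(2)) (generators e, f, k, k^{-1}) on O(SU_q(2)),
   acting on the second index of t^{1/2}, with coproduct
   De = e (x) k + k^{-1} (x) e,  Df = f (x) k + k^{-1} (x) f,  Dk = k (x) k. *)
Record is_Uq_action : Prop := {
  de_lin : forall (k : C) x y, de (k *: x + y) = k *: de x + de y;
  df_lin : forall (k : C) x y, df (k *: x + y) = k *: df x + df y;
  dk_lin : forall (k : C) x y, dk (k *: x + y) = k *: dk x + dk y;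
  dkinv_lin : forall (k : C) x y, dkinv (k *: x + y) = k *: dkinv x + dkinv y;
  dk_mul : forall x y, dk (x * y) = dk x * dk y;
  dkinv_mul : forall x y, dkinv (x * y) = dkinv x * dkinv y;
  dk_one : dk 1 = 1;
  dkinv_one : dkinv 1 = 1;
  dk_dkinv : forall x, dk (dkinv x) = x;
  dkinv_dk : forall x, dkinv (dk x) = x;
  de_mul : forall x y, de (x * y) = de x * dk y + dkinv x * de y;
  df_mul : forall x y, df (x * y) = df x * dk y + dkinv x * df y;
  dk_tp : forall i, dk (tmat i true) = sqrtC q *: tmat i true;
  dk_tm : forall i, dk (tmat i false) = (sqrtC q)^-1 *: tmat i false;
  de_tp : forall i, de (tmat i true) = 0;
  de_tm : forall i, de (tmat i false) = tmat i true;
  df_tp : forall i, df (tmat i true) = tmat i false;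
  df_tm : forall i, df (tmat i false) = 0
}.

Definition in_B (x : A) : Prop := dk x = x.

Definition in_Splus (x : A) : Prop :=
  exists b : bool -> A, (forall i, in_B (b i)) /\ x = \sum_(i : bool) tmat i true * b i.
Definition in_Sminus (x : A) : Prop :=
  exists b : bool -> A, (forall i, in_B (b i)) /\ x = \sum_(i : bool) tmat i false * b i.

(* Spinors s = (s+, s-) in S = S^+ (+) S^- (viewed inside L^2(S,h)). *)
Definition Dirac (s : A * A) : A * A := (de s.2, df s.1).

Definition lmul (b : A) (s : A * A) : A * A := (b * s.1, b * s.2).

(* The one-form [D, b] applied to a spinor (Clifford action). *)
Definition commD (b : A) (s : A * A) : A * A := Dirac (lmul b s) - lmul b (Dirac s).

Definition ip_plus (s t : A) : A := q *: (s * star t).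
Definition ip_minus (s t : A) : A := q^-1 *: (s * star t).
Definition frame_plus (i : bool) : A := (sqrtC q)^-1 *: tmat i true.
Definition frame_minus (i : bool) : A := sqrtC q *: tmat i false.

(* c o nabla^S, where nabla^{S+-}(x) = sum_i [D, <x, s_i>] (x) s_i and
   c([D,b] (x) s) = [D,b] s. *)
Definition clifford_grassmann (s : A * A) : A * A :=
  \sum_(i : bool) commD (ip_plus s.1 (frame_plus i)) (frame_plus i, 0)
  + \sum_(i : bool) commD (ip_minus s.2 (frame_minus i)) (0, frame_minus i).

End SUq2.

(* Main.v *)
Require Import Defs.
From mathcomp Require Import all_boot all_order all_algebra.
Import GRing.Theory Num.Theory.
Local Open Scope ring_scope.

Lemma star_central (C : numClosedFieldType) (A : lalgType C) (star : A -> A) :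
  (forall (k : C) x, star (k *: x) = (k^* ) *: star x) ->
  (forall x y, star (x * y) = star y * star x) -> star 1 = 1 ->
  (forall x, star (star x) = x) ->
  forall (k : C) (x y : A), x * (k *: y) = k *: (x * y).
Proof.
move=> sZ sM s1 sK k x y.
have h1 : x * (k *: 1) = k *: x.
  apply: (can_inj sK); by rewrite sM !sZ s1 -scalerAl mul1r.
have -> : k *: y = (k *: 1) * y by rewrite -scalerAl mul1r.
by rewrite mulrA h1 scalerAl.
Qed.

Lemma lin_facts (C : numClosedFieldType) (A : lalgType C) (f : A -> A) :
  (forall (k : C) x y, f (k *: x + y) = k *: f x + f y) ->
  [/\ f 0 = 0, forall x y, f (x + y) = f x + f y, forall x, f (- x) = - f x
   & forall (k : C) x, f (k *: x) = k *: f x].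
Proof.
move=> fl.
have f0 : f 0 = 0.
  have := fl 1 0 0; rewrite !scale1r addr0 => h.
  by apply: (addrI (f 0)); rewrite addr0 -h.
have fD : forall x y, f (x + y) = f x + f y by move=> x y; rewrite -[x]scale1r fl !scale1r.
have fZ : forall k x, f (k *: x) = k *: f x by move=> k x; rewrite -[k *: x]addr0 fl f0 addr0.
split=> // x; by rewrite -scaleN1r fZ scaleN1r.
Qed.

Lemma commD_p (C : numClosedFieldType) (A : lalgType C) (de df dk dkinv : A -> A) b x :
  de 0 = 0 -> (forall x y, df (x * y) = df x * dk y + dkinv x * df y) ->
  dkinv b = b -> commD de df b (x, 0) = (0, df b * dk x).
Proof.
move=> d0 dfM hb; rewrite /commD /Dirac /lmul /=.
rewrite mulr0 d0 mulr0 dfM hb.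
apply: injective_projections => /=; first by rewrite subr0.
by rewrite addrK.
Qed.

Lemma commD_m (C : numClosedFieldType) (A : lalgType C) (de df dk dkinv : A -> A) b x :
  df 0 = 0 -> (forall x y, de (x * y) = de x * dk y + dkinv x * de y) ->
  dkinv b = b -> commD de df b (0, x) = (de b * dk x, 0).
Proof.
move=> d0 deM hb; rewrite /commD /Dirac /lmul /=.
rewrite mulr0 d0 mulr0 deM hb.
apply: injective_projections => /=; last by rewrite subr0.
by rewrite addrK.
Qed.



Theorem mainTheorem10 (C : numClosedFieldType) (A : lalgType C) (q : C)
  (star : A -> A) (a c : A) (de df dk dkinv : A -> A) :
  0 < q -> q <= 1 ->
  is_SUq2 q star a c ->
  is_Uq_action q star a c de df dk dkinv ->
  forall xp xm : A,
    in_Splus q star a c dk xp -> in_Sminus q star a c dk xm ->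
    Dirac de df (xp, xm) = clifford_grassmann q star a c de df (xp, xm).
Proof.
move=> q0 _ HS HU xp xm [bp [Bp exp]] [bm [Bm exm]].
case: HS => sA sZ sM s1 sK rac racs rccs ru1 ru2.
case: HU => deL dfL dkL dkiL dkM dkiM dk1 dki1 dkdki dkidk deM dfM dktp dktm detp detm dftp dftm.
have [de0 deD deN deZ] := @lin_facts _ _ _ deL.
have [df0 dfD dfN dfZ] := @lin_facts _ _ _ dfL.
have [dk0 dkD dkN dkZ] := @lin_facts _ _ _ dkL.
have mZ := @star_central _ _ _ sZ sM s1 sK.
set s := sqrtC q in dktp dktm *.
have s0 : 0 < s by rewrite sqrtC_gt0.
have sne : s != 0 by rewrite lt0r_neq0.
have qne : q != 0 by rewrite lt0r_neq0.
have ssq : q = s * s by rewrite -expr2 sqrtCK.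
have qr : q^* = q by apply/conj_Creal/gtr0_real.
have sr : s^* = s by apply/conj_Creal/gtr0_real.
have sir : (s^-1)^* = s^-1 by apply/conj_Creal/gtr0_real; rewrite invr_gt0.
have qir : (q^-1)^* = q^-1 by apply/conj_Creal/gtr0_real; rewrite invr_gt0.
have stN : forall x, star (- x) = - star x.
  by move=> x; rewrite -scaleN1r sZ rmorphN1 scaleN1r.
pose t i := tmat q star a c i true.
pose u i := tmat q star a c i false.
have dks_t : forall i, dk (star (t i)) = s^-1 *: star (t i).
  case; rewrite /t /=.
    by rewrite sK (dktm false).
  by rewrite stN sZ sK qr dkN dkZ (dktm true) /= scalerN !scalerA mulrC.
have dks_u : forall i, dk (star (u i)) = s *: star (u i).
  case; rewrite /u /=.
    have h := dktp false; rewrite /= dkN dkZ in h.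
    have h2 : q *: dk (star c) = q *: (s *: star c).
      by apply: oppr_inj; rewrite h scalerN !scalerA mulrC.
    have := congr1 (fun x => q^-1 *: x) h2; rewrite /= !scalerA mulVf // !scale1r.
    by rewrite mulrA mulVf // mul1r.
  by rewrite (dktp true).
have dkxp : dk xp = s *: xp.
  by rewrite exp !big_bool dkD !dkM !dktp !Bp -!scalerAl scalerDr.
have dkxm : dk xm = s^-1 *: xm.
  by rewrite exm !big_bool dkD !dkM !dktm !Bm -!scalerAl scalerDr.
pose bP i := ip_plus q star xp (frame_plus q star a c i).
have bPE : forall i, bP i = (q * s^-1) *: (xp * star (t i)).
  by move=> i; rewrite /bP /ip_plus /frame_plus sZ sir mZ scalerA.
have dkbP : forall i, dk (bP i) = bP i.
  move=> i; rewrite bPE dkZ dkM dkxp dks_t -!scalerAl !mZ !scalerA; congr (_ *: _).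
  by rewrite divfK.
have hinvP : forall i, dkinv (bP i) = bP i by move=> i; rewrite -{1}(dkbP i) dkidk.
pose bM i := ip_minus q star xm (frame_minus q star a c i).
have bME : forall i, bM i = (q^-1 * s) *: (xm * star (u i)).
  by move=> i; rewrite /bM /ip_minus /frame_minus sZ sr mZ scalerA.
have dkbM : forall i, dk (bM i) = bM i.
  move=> i; rewrite bME dkZ dkM dkxm dks_u -!scalerAl !mZ !scalerA; congr (_ *: _).
  by rewrite mulfK.
have hinvM : forall i, dkinv (bM i) = bM i by move=> i; rewrite -{1}(dkbM i) dkidk.
have dkfp : forall i, dk (frame_plus q star a c i) = t i.
  by move=> i; rewrite /frame_plus dkZ dktp scalerA mulVf // scale1r.
have dkfm : forall i, dk (frame_minus q star a c i) = u i.
  by move=> i; rewrite /frame_minus dkZ dktm scalerA mulfV // scale1r.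
have keyP : forall i, df (bP i) * t i = s^-1 *: (df (bP i * t i) - bP i * u i).
  by move=> i; rewrite dfM hinvP dktp dftp mZ addrK scalerA mulVf // scale1r.
have keyM : forall i, de (bM i) * u i = s *: (de (bM i * u i) - bM i * t i).
  by move=> i; rewrite deM hinvM dktm detm mZ addrK scalerA mulfV // scale1r.
rewrite /clifford_grassmann !big_bool.
rewrite -/(bP true) -/(bP false) -/(bM true) -/(bM false).
rewrite !(@commD_p _ _ de df dk dkinv) // !(@commD_m _ _ de df dk dkinv) // !dkfp !dkfm.
rewrite !keyP !keyM.
have sumPt : bP true * t true + bP false * t false = (q * s^-1) *: xp.
  rewrite !bPE -!scalerAl -scalerDr -!mulrA -mulrDr /t /= sK stN sZ sK qr mulrNN.
  by rewrite -scalerAl mZ scalerA -expr2 ru2 mulr1.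
have sumPu : bP true * u true + bP false * u false = 0.
  rewrite !bPE -!scalerAl -scalerDr -!mulrA -mulrDr /t /u /= sK stN sZ sK qr.
  by rewrite mulNr -scalerAl -rac subrr mulr0 scaler0.
have sumMu : bM true * u true + bM false * u false = (q^-1 * s) *: xm.
  rewrite !bME -!scalerAl -scalerDr -!mulrA -mulrDr /u /=.
  by rewrite addrC ru1 mulr1.
have sumMt : bM true * t true + bM false * t false = 0.
  rewrite !bME -!scalerAl -scalerDr -!mulrA -mulrDr /t /u /=.
  have h : star c * star a = q *: (star a * star c).
    by rewrite -sM rac sZ sM qr.
  by rewrite mulrN mZ -h subrr mulr0 scaler0.
apply: injective_projections => /=.
  rewrite addr0 -scalerDr addrACA -opprD -deD sumMu sumMt subr0 deZ scalerA.
  by rewrite add0r ssq invfM -mulrA mulVf // mulr1 mulfV // scale1r.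
rewrite addr0 -scalerDr addrACA -opprD -dfD sumPt sumPu subr0 dfZ scalerA.
by rewrite addr0 ssq mulfK // mulVf // scale1r.
Qed.
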